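(* Under the hypotheses of Theorem 2 (Assumptions A, B, C, D; Algorithm 2; $T=\beta/\varepsilon$; $\eta^{(t)}=D\sqrt\varepsilon$; $\alpha_i^{(t)}=(1+\varepsilon)^t\frac{\alpha}{e^\beta L_\phi}$ with $\alpha\in(0,\tfrac14)$), $$\frac1T\sum_{t=0}^{T-1}\frac1n\sum_{i=1}^n\big[f(w^{(t)};i)-\phi_i(h_i^* )\big]\le\frac{e^{\beta}L_\phi(1+\varepsilon)}{2(1-4\alpha)\alpha\beta}\cdot\frac1n\sum_{i=1}^n\|h(w^{(0)};i)-h_i^*\|^2\cdot\varepsilon+\frac{e^{\beta}L_\phi(4\varepsilon+3)}{2\alpha(1-4\alpha)}\Big[D^2H^2+c\big(2+(V+\varepsilon^2+2)GD^2\big)^2+2+V\Big]\varepsilon.$$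
   Context: Let $n,c,d$ be positive integers and $[n]=\{1,\dots,n\}$. For each $i\in[n]$ let $h(\cdot;i):\mathbb{R}^d\to\mathbb{R}^c$ (components $h_j(\cdot;i)$) and $\phi_i:\mathbb{R}^c\to\mathbb{R}$; $f(w;i)=\phi_i(h(w;i))$. Each $\phi_i$ attains its minimum at $h_i^*$. Norms: Euclidean for vectors, operator for matrices. Assumption A: each $\phi_i$ is convex, bounded below, and $L_\phi$-smooth. Assumption B: each $h(\cdot;i)$ is twice continuously differentiable and there is $G>0$ with $\|\nabla_w^2 h_j(w;i)\|\le G$ for all $w,i,j$. Iteration setup: given $\varepsilon>0$, $\eta^{(t)}>0$, $\alpha_i^{(t)}>0$ and iterates $w^{(t)}$, let $H_i^{(t)}$ be the Jacobian of $h(\cdot;i)$ at $w^{(t)}$, $\Phi^{(t)}(v)=\frac{1}{2n}\sum_{i=1}^n\|\eta^{(t)}H_i^{(t)}v-\alpha_i^{(t)}\nabla\phi_i(h(w^{(t)};i))\|^2$, $\Psi^{(t)}(v)=\Phi^{(t)}(v)+\frac{\varepsilon^2}{2}\|v\|^2$, $v_{*\mathrm{reg}}^{(t)}$ its unique minimizer. Algorithm 2: $w^{(0)}$ arbitrary, $w^{(t+1)}=w^{(t)}-\eta^{(t)}v^{(t)}$ where $\|v^{(t)}-v_{*\mathrm{reg}}^{(t)}\|\le\varepsilon$, $t=0,\dots,T-1$, with $T=\beta/\varepsilon$ an integer, $\beta>0$. Assumption C (constant $V>0$): for each $0\le t<T$ there is $\hat v^{(t)}$ with $\|\hat v^{(t)}\|^2\le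 V$ and $\Phi^{(t)}(\hat v^{(t)})\le\varepsilon^2$. Assumption D (constant $H>0$): $\|H_i^{(t)}\|\le H/\sqrt\varepsilon$ for all $i\in[n]$, $0\le t<T$. *)

(* Defs.v *)
From HB Require Import structures.
From mathcomp Require Import all_boot all_order all_algebra.
From mathcomp Require Import all_classical all_reals all_analysis.
Set Implicit Arguments. Unset Strict Implicit. Unset Printing Implicit Defensive.
Import Order.TTheory GRing.Theory Num.Theory.
Import numFieldNormedType.Exports.
Local Open Scope ring_scope.

Definition sqnorm (R : realType) (m : nat) (v : 'cV[R]_m) : R :=
  \sum_(k < m) (v k ord0) ^+ 2.
Definition enorm (R : realType) (m : nat) (v : 'cV[R]_m) : R :=
  Num.sqrt (sqnorm v).

Definition ubasis (R : realType) (m : nat) (k : 'I_m) : 'cV[R]_m := delta_mx k ord0.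

Definition partial (R : realType) (m : nat) (f : 'cV[R]_m -> R) (k : 'I_m)
  (x : 'cV[R]_m) : R := derive f x (ubasis R k).
Definition grad (R : realType) (m : nat) (f : 'cV[R]_m -> R) (x : 'cV[R]_m)
  : 'cV[R]_m := \col_k partial f k x.
Definition hess (R : realType) (m : nat) (f : 'cV[R]_m -> R) (x : 'cV[R]_m)
  : 'M[R]_m := \matrix_(k, l) partial (partial f l) k x.

Definition hcomp (R : realType) (c d : nat) (h : 'cV[R]_d -> 'cV[R]_c) (j : 'I_c)
  : 'cV[R]_d -> R := fun w => h w j ord0.
Definition jac (R : realType) (c d : nat) (h : 'cV[R]_d -> 'cV[R]_c) (w : 'cV[R]_d)
  : 'M[R]_(c, d) := \matrix_(j, k) partial (hcomp h j) k w.

Definition op_norm_le (R : realType) (p q : nat) (A : 'M[R]_(p, q)) (b : R) : Prop :=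
  forall v : 'cV[R]_q, enorm (A *m v) <= b * enorm v.

Definition convex_fn (R : realType) (m : nat) (f : 'cV[R]_m -> R) : Prop :=
  forall (x y : 'cV[R]_m) (t : R), 0 <= t <= 1 ->
    f (t *: x + (1 - t) *: y) <= t * f x + (1 - t) * f y.
Definition bounded_below (R : realType) (m : nat) (f : 'cV[R]_m -> R) : Prop :=
  exists b : R, forall x, b <= f x.
Definition Lsmooth (R : realType) (m : nat) (L : R) (f : 'cV[R]_m -> R) : Prop :=
  (forall x, differentiable f x) /\
  (forall x y, enorm (grad f x - grad f y) <= L * enorm (x - y)).
Definition C2 (R : realType) (m : nat) (f : 'cV[R]_m -> R) : Prop :=
  (forall x, differentiable f x) /\
  (forall k x, differentiable (partial f k) x) /\
  (forall k l, continuous (fun x => hess f x k l)).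

Definition PhiF (R : realType) (n c d : nat) (h : 'I_n -> 'cV[R]_d -> 'cV[R]_c)
  (phi : 'I_n -> 'cV[R]_c -> R) (eta : R) (al : 'I_n -> R) (w u : 'cV[R]_d) : R :=
  (2 * n%:R)^-1 * \sum_(i < n)
     sqnorm (eta *: (jac (h i) w *m u) - al i *: grad (phi i) (h i w)).
Definition PsiF (R : realType) (n c d : nat) (h : 'I_n -> 'cV[R]_d -> 'cV[R]_c)
  (phi : 'I_n -> 'cV[R]_c -> R) (eta : R) (al : 'I_n -> R) (eps : R)
  (w u : 'cV[R]_d) : R :=
  PhiF h phi eta al w u + eps ^+ 2 / 2 * sqnorm u.

(* Main.v *)
Require Import Defs.
From HB Require Import structures.
From mathcomp Require Import all_boot all_order all_algebra.
From mathcomp Require Import all_classical all_reals all_analysis.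
From mathcomp Require Import ring lra.
Import Order.TTheory GRing.Theory Num.Theory.
Import numFieldNormedType.Exports.
Local Open Scope ring_scope.
Set Implicit Arguments. Unset Strict Implicit.

Section VecAlg.
Variable R : realType.
Variable m : nat.
Implicit Types a b e : 'cV[R]_m.

Definition dot a b : R := \sum_(k < m) a k ord0 * b k ord0.

Lemma sqnorm_ge0 a : 0 <= sqnorm a.
Proof. by apply: sumr_ge0 => k _; apply: sqr_ge0. Qed.

Lemma sqnormD a b : sqnorm (a + b) = sqnorm a + 2 * dot a b + sqnorm b.
Proof.
rewrite /sqnorm /dot mulr_sumr -!big_split /=; apply: eq_bigr => k _.
rewrite !mxE; ring.
Qed.

Lemma sqnormN a : sqnorm (- a) = sqnorm a.
Proof. by apply: eq_bigr => k _; rewrite !mxE sqrrN. Qed.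

Lemma sqnormB a b : sqnorm (a - b) = sqnorm a - 2 * dot a b + sqnorm b.
Proof.
rewrite /sqnorm /dot mulr_sumr -sumrB -big_split /=; apply: eq_bigr => k _.
rewrite !mxE; ring.
Qed.

Lemma sqnormZ (s : R) a : sqnorm (s *: a) = s ^+ 2 * sqnorm a.
Proof.
rewrite /sqnorm mulr_sumr; apply: eq_bigr => k _; rewrite !mxE; ring.
Qed.

Lemma dotZr (s : R) a b : dot a (s *: b) = s * dot a b.
Proof. by rewrite /dot mulr_sumr; apply: eq_bigr => k _; rewrite !mxE mulrCA. Qed.

Lemma dotNr a b : dot a (- b) = - dot a b.
Proof. rewrite /dot -sumrN; apply: eq_bigr => k _; rewrite !mxE; ring. Qed.

Lemma dotDr a b e : dot a (b + e) = dot a b + dot a e.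
Proof. by rewrite /dot -big_split; apply: eq_bigr => k _; rewrite !mxE mulrDr. Qed.

Lemma dotBr a b e : dot a (b - e) = dot a b - dot a e.
Proof. by rewrite dotDr dotNr. Qed.

Lemma dotC a b : dot a b = dot b a.
Proof. by apply: eq_bigr => k _; rewrite mulrC. Qed.

Lemma young (s : R) a b : 0 < s ->
  2 * dot a b <= s * sqnorm a + s^-1 * sqnorm b.
Proof.
move=> s0; rewrite /dot /sqnorm !mulr_sumr -big_split /=.
apply: ler_sum => k _.
have : 0 <= (s * a k ord0 - b k ord0) ^+ 2 by apply: sqr_ge0.
set x := a k ord0; set y := b k ord0 => H.
have si : s * s^-1 = 1 by rewrite mulfV // gt_eqF.
have si0 : 0 < s^-1 by rewrite invr_gt0.
have : 0 <= s^-1 * (s * x - y) ^+ 2 by rewrite mulr_ge0 // ltW.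
nra.
Qed.

Lemma sqnormD_le (s : R) a b : 0 < s ->
  sqnorm (a + b) <= (1 + s) * sqnorm a + (1 + s^-1) * sqnorm b.
Proof.
move=> s0; rewrite sqnormD; have := @young s a b s0; lra.
Qed.

Lemma sqnorm3 a b e : sqnorm (a + b + e) <= 3 * (sqnorm a + sqnorm b + sqnorm e).
Proof.
rewrite /sqnorm -!big_split mulr_sumr /=; apply: ler_sum => k _; rewrite !mxE.
set x := a k ord0; set y := b k ord0; set z := e k ord0.
have := sqr_ge0 (x - y); have := sqr_ge0 (y - z); have := sqr_ge0 (x - z).
nra.
Qed.

Lemma enorm_sq a : enorm a ^+ 2 = sqnorm a.
Proof. by rewrite /enorm sqr_sqrtr // sqnorm_ge0. Qed.

Lemma enorm_ge0 a : 0 <= enorm a.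
Proof. exact: sqrtr_ge0. Qed.

Lemma enorm_le_sq a (r : R) : enorm a <= r -> sqnorm a <= r ^+ 2.
Proof.
move=> H; rewrite -enorm_sq; have := enorm_ge0 a; nra.
Qed.

End VecAlg.

Lemma op_norm_sq (R : realType) (p q : nat) (A : 'M[R]_(p, q)) (r : R) (u : 'cV[R]_q) :
  0 <= r -> op_norm_le A r -> sqnorm (A *m u) <= r ^+ 2 * sqnorm u.
Proof.
move=> r0 H; have := H u => /enorm_le_sq; rewrite exprMn enorm_sq //.
Qed.

Local Open Scope classical_set_scope.
Local Open Scope ring_scope.

Section Anal.
Variable R : realType.
Variable m : nat.
Implicit Types (u x y : 'cV[R]_m) (F : 'cV[R]_m -> R).

Lemma cV_decomp u : u = \sum_(l < m) u l ord0 *: ubasis R l.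
Proof.
rewrite {1}(matrix_sum_delta u); apply: eq_bigr => l _.
by rewrite big_ord1.
Qed.

Lemma deriv_dir F y u : differentiable F y ->
  derive F y u = \sum_(l < m) u l ord0 * partial F l y.
Proof.
move=> dF; rewrite deriveE // {1}(cV_decomp u) linear_sum.
apply: eq_bigr => l _; rewrite linearZ /= /partial deriveE //.
Qed.

Lemma line_is_derive F x u s : differentiable F (x + s *: u) ->
  is_derive s 1 (fun r : R => F (x + r *: u)) (derive F (x + s *: u) u).
Proof.
move=> dF.
have E : (fun h : R => h^-1 *: (((fun r : R => F (x + r *: u)) \o shift s) (h *: 1)
            - F (x + s *: u)))
       = (fun h : R => h^-1 *: ((F \o shift (x + s *: u)) (h *: u) - F (x + s *: u))).
  apply/funext => h /=; congr (_ *: (F _ - _)).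
  by rewrite [h%:A]mulr1 scalerDl addrCA.
constructor.
  by rewrite /derivable E; exact: diff_derivable.
by rewrite /derive E.
Qed.

Lemma convex_grad F x y : convex_fn F -> differentiable F x ->
  derive F x (y - x) <= F y - F x.
Proof.
move=> cF dF.
have dv : derivable F x (y - x) by exact: diff_derivable.
rewrite /derive.
set q := (fun h : R => _).
have H : q @ 0^'+ --> lim (q @ 0^').
  apply: cvg_trans dv; apply: cvg_app; apply: within_subset => r /= r0.
  by rewrite gt_eqF.
apply: (cvgr_to_le H).
near=> r.
have r0 : 0 < r by near: r; exact: nbhs_right_gt.
have r1 : r < 1 by near: r; exact: nbhs_right_lt.
rewrite /q /=.
have E : r *: (y - x) + x = r *: y + (1 - r) *: x.
  apply/matrixP => i j; rewrite !mxE; lra.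
rewrite E.
have := cF y x r; rewrite (ltW r0) (ltW r1) => /(_ isT) C.
rewrite /GRing.scale /=.
rewrite ler_pdivrMl //.
lra.
Unshelve. all: by end_near.
Qed.

End Anal.

Unset Implicit Arguments. Set Strict Implicit.

Lemma test (R : realType) (g p : R -> R) (K : R) (s : R) :
  (forall s : R, is_derive s (1:R) g (p s)) ->
  is_derive s (1:R) (fun s : R => g s - s * p 0 - K / 2 * (s * s)) (p s - p 0 - K * s).
Proof.
move=> dg.
have -> : (fun s : R => g s - s * p 0 - K / 2 * (s * s)) =
   g - (fun s => p 0 *: s) - (K / 2) \*: (fun s : R => s * s).
  by apply/funext => r /=; rewrite /GRing.scale /= mulrC.
apply: is_derive_eq.
by rewrite /GRing.scale /= !mulr1; lra.
Qed.

Lemma taylor_up (R : realType) (g p : R -> R) (K : R) :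
  (forall s : R, is_derive s (1:R) g (p s)) -> (forall s : R, derivable p s 1) ->
  (forall s : R, derive1 p s <= K) -> g 1 - g 0 - p 0 <= K / 2.
Proof.
move=> dg dp pK.
set q := (fun s : R => g s - s * p 0 - K / 2 * (s * s)).
have dq s : is_derive s (1:R) q (p s - p 0 - K * s) by exact: test.
have cq : {within `[0, 1], continuous q}.
  by apply: derivable_within_continuous => s _; case: (dq s).
have [c c01 Ec] := MVT ltr01 (fun s _ => dq s) cq.
have c0 : 0 < c by move: c01; rewrite in_itv /= => /andP[].
have dp' x : is_derive x (1:R) p (derive1 p x).
  by rewrite derive1E; exact: derivableP (dp x).
have cp : {within `[0, c], continuous p}.
  by apply: derivable_within_continuous => s _; exact: dp.
have [c' _ Ec'] := MVT c0 (fun x _ => dp' x) cp.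
have := pK c'.
move: Ec Ec'; rewrite /q /= !subr0 !mulr1 !mul0r !mulr0 !subr0 => Ec Ec' H.
rewrite mul1r in Ec.
set d := derive1 p c' in Ec' H.
have : d * c <= K * c by rewrite ler_pM2r.
lra.
Qed.

Lemma taylor_abs (R : realType) (g p : R -> R) (K : R) :
  (forall s : R, is_derive s (1:R) g (p s)) -> (forall s : R, derivable p s 1) ->
  (forall s : R, `|derive1 p s| <= K) -> `|g 1 - g 0 - p 0| <= K / 2.
Proof.
move=> dg dp pK; rewrite ler_norml; apply/andP; split; last first.
  by apply: taylor_up => // s; have := pK s; rewrite ler_norml => /andP[].
have dg' s : is_derive s (1:R) (- g) (- p s) by exact: is_deriveN.
have dp' s : derivable (- p) s 1 by exact: derivableN.
have := @taylor_up R (- g) (- p) K dg' dp'.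
have E s : derive1 (- p) s = - derive1 p s by rewrite !derive1E deriveN.
have pK' s : derive1 (- p) s <= K.
  rewrite E; have := pK s; by rewrite ler_norml lerNl => /andP[].
move/(_ pK') => /=. rewrite !opprfctE. lra.
Qed.

Section Taylor.
Variable R : realType.
Variable m : nat.

Lemma taylor_F (F : 'cV[R]_m -> R) (x u : 'cV[R]_m) (Kq : R) :
  (forall y, differentiable F y) -> (forall l y, differentiable (partial F l) y) ->
  (forall y, `|dot u (hess F y *m u)| <= Kq) ->
  `|F (x + u) - F x - \sum_(l < m) u l ord0 * partial F l x| <= Kq / 2.
Proof.
move=> dF dP hK.
pose g := fun s : R => F (x + s *: u).
pose p := fun s : R => \sum_(l < m) u l ord0 * partial F l (x + s *: u).
have dg s : is_derive s (1:R) g (p s).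
  apply: is_derive_eq; first exact: line_is_derive.
  by rewrite deriv_dir.
pose pl := fun (l : 'I_m) (s : R) => partial F l (x + s *: u).
have Ep : p = \sum_(l < m) (u l ord0 \*: pl l).
  by apply/funext => s; rewrite /p fct_sumE.
have dp s : is_derive s (1:R) p (\sum_(l < m) u l ord0 * derive (partial F l) (x + s *: u) u).
  rewrite Ep; apply: is_derive_sum => l; apply: is_deriveZ; exact: line_is_derive.
have dp2 s : derivable p s 1 by case: (dp s).
have := @taylor_abs R g p Kq dg dp2.
rewrite /g /p scale1r scale0r addr0.
apply => s.
rewrite derive1E derive_val.
set y := x + s *: u.
suff -> : \sum_(l < m) u l ord0 * derive (partial F l) y u = dot u (hess F y *m u) by [].
rewrite /dot.
transitivity (\sum_(l < m) \sum_(k < m) u l ord0 * (u k ord0 * partial (partial F l) k y)).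
  by apply: eq_bigr => l _; rewrite deriv_dir // mulr_sumr.
rewrite exchange_big; apply: eq_bigr => k _; rewrite mxE mulr_sumr.
apply: eq_bigr => l _; rewrite /hess mxE.
by rewrite mulrCA (mulrC (u l ord0)).
Qed.
End Taylor.

Section Conv.
Variable R : realType.
Variable m : nat.

Lemma quad_bound (A : 'M[R]_m) (G : R) (u : 'cV[R]_m) : 0 < G -> op_norm_le A G ->
  `|dot u (A *m u)| <= G * sqnorm u.
Proof.
move=> G0 HA.
have HS := op_norm_sq u (ltW G0) HA.
have y1 := young u (A *m u) G0.
have y2 := young u (- (A *m u)) G0.
rewrite dotNr sqnormN in y2.
have E : G^-1 * (G ^+ 2 * sqnorm u) = G * sqnorm u.
  by rewrite mulrA expr2 mulrA mulVf ?gt_eqF // mul1r.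
have HS' : G^-1 * sqnorm (A *m u) <= G * sqnorm u.
  by rewrite -E ler_pM2l ?invr_gt0.
rewrite ler_norml; apply/andP; split; lra.
Qed.

Lemma dot_grad (F : 'cV[R]_m -> R) x u : differentiable F x ->
  derive F x u = dot (grad F x) u.
Proof.
move=> dF; rewrite deriv_dir //; apply: eq_bigr => l _.
by rewrite /grad mxE mulrC.
Qed.

Lemma grad_ineq (F : 'cV[R]_m -> R) x y : convex_fn F -> differentiable F x ->
  dot (grad F x) (y - x) <= F y - F x.
Proof. by move=> cF dF; rewrite -dot_grad //; exact: convex_grad. Qed.

Lemma smooth_bound (F : 'cV[R]_m -> R) (L : R) (hs x : 'cV[R]_m) :
  0 < L -> convex_fn F -> Lsmooth L F -> (forall z, F hs <= F z) ->
  sqnorm (grad F x) <= 4 * L * (F x - F hs).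
Proof.
move=> L0 cF [dF lF] mF.
set g := grad F x.
set y := x - (2 * L)^-1 *: g.
have h1 := grad_ineq F y x cF (dF y).
have E1 : x - y = (2 * L)^-1 *: g by rewrite /y opprB addrC subrK.
have E2 : y - x = - ((2 * L)^-1 *: g) by rewrite -E1 opprB.
have s1 : sqnorm (y - x) = (2 * L)^-1 ^+ 2 * sqnorm g by rewrite E2 sqnormN sqnormZ.
have d1 : dot (grad F y) (x - y) = dot g (x - y) - dot (g - grad F y) (x - y).
  rewrite [dot g _]dotC [dot (g - _) _]dotC [dot (grad F y) _]dotC dotBr; lra.
have d2 : dot g (x - y) = (2 * L)^-1 * sqnorm g.
  by rewrite E1 dotZr /dot /sqnorm; congr (_ * _); apply: eq_bigr => k _; rewrite expr2.
have lip : sqnorm (g - grad F y) <= L ^+ 2 * sqnorm (x - y).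
  have := lF x y => /enorm_le_sq; rewrite exprMn enorm_sq //.
have Li0 : 0 < L^-1 by rewrite invr_gt0.
have yo := young (g - grad F y) (x - y) Li0.
rewrite invrK in yo.
have s2 : sqnorm (x - y) = (2 * L)^-1 ^+ 2 * sqnorm g by rewrite E1 sqnormZ.
have h2 := mF y.
set S := sqnorm g in s1 s2 d2 lip *.
have Li : L^-1 * (L ^+ 2 * sqnorm (x - y)) = L * sqnorm (x - y).
  by rewrite mulrA expr2 mulrA mulVf ?gt_eqF // mul1r.
have Li' : L^-1 * sqnorm (g - grad F y) <= L * sqnorm (x - y).
  by rewrite -Li ler_pM2l ?invr_gt0.
have key : F y - F x <= - (4 * L)^-1 * S.
  rewrite s2 in Li' yo.
  have e3 : (2 * L)^-1 ^+ 2 = (4 * L)^-1 / L.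
    by field; rewrite gt_eqF.
  have e4 : (2 * L)^-1 = 2 * (4 * L)^-1.
    by field; rewrite gt_eqF.
  rewrite e3 e4 in d2 Li' yo *.
  have e5 : L * ((4 * L)^-1 / L * S) = (4 * L)^-1 * S.
    by field; rewrite gt_eqF.
  rewrite e5 in Li' yo.
  lra.
have S0 : 0 <= S := sqnorm_ge0 g.
have : S <= 4 * L * (F x - F y).
  have e6 : S = 4 * L * ((4 * L)^-1 * S) by field; rewrite gt_eqF.
  rewrite [X in X <= _]e6 ler_pM2l ?mulr_gt0 //; lra.
have : 4 * L * (F x - F y) <= 4 * L * (F x - F hs) by rewrite ler_pM2l ?mulr_gt0 //; lra.
lra.
Qed.

End Conv.

Lemma step_i (R : realType) (m : nat) (a g u : 'cV[R]_m) (at0 al L Dl e : R) :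
  - dot g a <= - Dl -> sqnorm g <= 4 * L * Dl -> 0 <= Dl -> 0 <= at0 ->
  at0 * L <= al -> 0 < e ->
  sqnorm (a - at0 *: g + u) <=
    (1 + e) * (sqnorm a - 2 * at0 * (1 - 2 * al) * Dl) + (1 + e^-1) * sqnorm u.
Proof.
move=> h1 h2 h3 h4 h5 e0.
have := sqnormD_le (a - at0 *: g) u e0.
rewrite sqnormB sqnormZ dotZr [dot a g]dotC.
have h6 : at0 ^+ 2 * sqnorm g <= at0 ^+ 2 * (4 * L * Dl) by rewrite ler_wpM2l ?sqr_ge0.
have h8 : 0 <= at0 * Dl by rewrite mulr_ge0.
have h7 : at0 ^+ 2 * (4 * L * Dl) <= at0 * (4 * al * Dl).
  have : 0 <= (at0 * Dl) * (al - at0 * L) by rewrite mulr_ge0 // subr_ge0.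
  rewrite expr2; nra.
have h9 : - dot g a * at0 <= - Dl * at0 by rewrite ler_wpM2r.
have Q : sqnorm a - 2 * (at0 * dot g a) + at0 ^+ 2 * sqnorm g <=
         sqnorm a - 2 * at0 * (1 - 2 * al) * Dl.
  nra.
have : (1 + e) * (sqnorm a - 2 * (at0 * dot g a) + at0 ^+ 2 * sqnorm g) <=
       (1 + e) * (sqnorm a - 2 * at0 * (1 - 2 * al) * Dl).
  by rewrite ler_wpM2l // addr_ge0 // ltW.
lra.
Qed.

Lemma rho_bound (R : realType) (c d : nat) (hh : 'cV[R]_d -> 'cV[R]_c) (x v : 'cV[R]_d)
  (eta G B : R) :
  0 < G -> (forall j, C2 (hcomp hh j)) ->
  (forall j y, op_norm_le (hess (hcomp hh j) y) G) ->
  G * (eta ^+ 2 * sqnorm v) / 2 <= B ->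
  sqnorm (hh (x - eta *: v) - hh x + eta *: (jac hh x *m v)) <= c%:R * B ^+ 2.
Proof.
move=> G0 hC hH hB.
rewrite /sqnorm -[c in c%:R](card_ord c) -sum1_card natr_sum mulr_suml.
apply: ler_sum => j _; rewrite mul1r.
set u := - (eta *: v).
have [dF [dP _]] := hC j.
have T := @taylor_F R d (hcomp hh j) x u _ dF dP (fun y => @quad_bound R d _ G u G0 (hH j y)).
have E : (hh (x - eta *: v) - hh x + eta *: (jac hh x *m v)) j ord0 =
   hcomp hh j (x + u) - hcomp hh j x - \sum_(l < d) u l ord0 * partial (hcomp hh j) l x.
  rewrite !mxE /hcomp /u; congr (_ + _).
  rewrite mulr_sumr -sumrN; apply: eq_bigr => l _; rewrite !mxE.
  by rewrite mulNr opprK mulrCA mulrC.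
rewrite E.
have su : sqnorm u = eta ^+ 2 * sqnorm v by rewrite /u sqnormN sqnormZ.
rewrite su in T.
have : `|hcomp hh j (x + u) - hcomp hh j x - \sum_(l < d) u l ord0 * partial (hcomp hh j) l x| <= B.
  exact: le_trans T hB.
rewrite ler_norml => /andP[h1 h2]; nra.
Qed.

Lemma avg_lin (R : realType) (n : nat) (x y z s : 'I_n -> R) (p k M C : R) :
  (0 < n)%N -> (forall i, s i <= p * (x i - k * y i) + M * (C + z i)) ->
  n%:R^-1 * \sum_(i < n) s i <=
  p * (n%:R^-1 * \sum_(i < n) x i - k * (n%:R^-1 * \sum_(i < n) y i))
  + M * (C + n%:R^-1 * \sum_(i < n) z i).
Proof.
move=> n0 H.
have n0' : 0 < n%:R :> R by rewrite ltr0n.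
have S : \sum_(i < n) s i <= \sum_(i < n) (p * (x i - k * y i) + M * (C + z i)).
  by apply: ler_sum => i _; exact: H.
have E : \sum_(i < n) (p * (x i - k * y i) + M * (C + z i)) =
   p * (\sum_(i < n) x i - k * \sum_(i < n) y i) + M * (n%:R * C + \sum_(i < n) z i).
  rewrite big_split /= -!mulr_sumr big_split /= sumrN -mulr_sumr big_split /= sumr_const card_ord.
  by rewrite -[C *+ n]mulr_natl.
rewrite E in S.
have ni : 0 <= n%:R^-1 :> R by rewrite invr_ge0 ltW.
have := ler_wpM2l ni S.
have -> : n%:R^-1 * (p * (\sum_(i < n) x i - k * \sum_(i < n) y i) +
      M * (n%:R * C + \sum_(i < n) z i)) =
   p * (n%:R^-1 * \sum_(i < n) x i - k * (n%:R^-1 * \sum_(i < n) y i))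
  + M * (C + n%:R^-1 * \sum_(i < n) z i).
  by field; rewrite gt_eqF.
by [].
Qed.

Lemma telescope_le (R : realType) (T : nat) (A Dl : nat -> R) (q kap b C : R) :
  1 <= q -> 0 <= C ->
  (forall t, (t < T)%N -> A t.+1 <= q * (A t - 2 * (q ^+ t * kap) * b * Dl t) + C * q) ->
  0 <= A T ->
  2 * kap * b * \sum_(t < T) Dl t <= A 0%N + C * T%:R.
Proof.
move=> q1 C0 H AT.
have q0 : 0 < q by exact: lt_le_trans ltr01 q1.
have qt t : 1 <= q ^+ t by exact: exprn_ege1.
suff S : forall T', (T' <= T)%N ->
   2 * kap * b * \sum_(t < T') Dl t + A T' / q ^+ T' <= A 0%N + C * T'%:R.
  have := S T (leqnn T).
  have : 0 <= A T / q ^+ T by rewrite divr_ge0 // (le_trans ler01 (qt T)).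
  lra.
elim => [|T' IH] HT'.
  by rewrite big_ord0 expr0 divr1 mulr0 add0r mulr0 addr0.
have IH' := IH (ltnW HT').
have Ht := H T' HT'.
rewrite big_ord_recr /=.
have qT0 : 0 < q ^+ T' by exact: lt_le_trans ltr01 (qt T').
have E : A T'.+1 / q ^+ T'.+1 <= A T' / q ^+ T' - 2 * kap * b * Dl T' + C / q ^+ T'.
  rewrite exprS ler_pdivrMr ?mulr_gt0 //.
  have -> : (A T' / q ^+ T' - 2 * kap * b * Dl T' + C / q ^+ T') * (q * q ^+ T') =
     q * (A T' - 2 * (q ^+ T' * kap) * b * Dl T') + C * q.
    by field; rewrite gt_eqF.
  exact: Ht.
have E2 : C / q ^+ T' <= C.
  by rewrite ler_pdivrMr // ler_peMr.
rewrite -addn1 natrD.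
lra.
Qed.

Lemma final_arith (R : realType) (A0 K S L eb eps beta alpha : R) (T : nat) :
  0 <= A0 -> 0 <= K -> 0 < L -> 0 < eb -> 0 < eps -> 0 < beta -> 0 < alpha ->
  alpha < 1 / 4 -> T%:R = beta / eps ->
  2 * (alpha / (eb * L)) * (1 - 2 * alpha) * S <= A0 + 3 * eps * K * T%:R ->
  T%:R^-1 * S <= eb * L * (1 + eps) / (2 * (1 - 4 * alpha) * alpha * beta) * A0 * eps
   + eb * L * (4 * eps + 3) / (2 * alpha * (1 - 4 * alpha)) * K * eps.
Proof.
move=> A00 K0 L0 eb0 e0 b0 a0 a4 HT H.
set b := 1 - 2 * alpha.
have bp : 0 < b by rewrite /b; lra.
have cp : 0 < 1 - 4 * alpha by lra.
set k := 2 * (alpha / (eb * L)) * b.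
have ebL : 0 < eb * L := mulr_gt0 eb0 L0.
have kp : 0 < k by rewrite /k; apply: mulr_gt0 => //; apply: mulr_gt0 => //; apply: divr_gt0.
have Tp : 0 < T%:R :> R by rewrite HT; apply: divr_gt0.
have h1 : S <= (A0 + 3 * eps * K * T%:R) / k.
  rewrite ler_pdivlMr //; by rewrite mulrC.
have h2 : T%:R^-1 * S <= T%:R^-1 * ((A0 + 3 * eps * K * T%:R) / k).
  by rewrite ler_wpM2l // invr_ge0 ltW.
set Y := A0 * eps / beta.
set Z := eps * K.
have Y0 : 0 <= Y by rewrite /Y divr_ge0 ?mulr_ge0 // ltW.
have Z0 : 0 <= Z by rewrite /Z mulr_ge0 // ltW.
set R1 := eb * L / (2 * alpha * b).
have E1 : T%:R^-1 * ((A0 + 3 * eps * K * T%:R) / k) = R1 * Y + 3 * R1 * Z.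
  rewrite HT /R1 /Y /Z /k; field.
  by rewrite !gt_eqF //= ?mulr_gt0.
set Q1 := eb * L * (1 + eps) / (2 * (1 - 4 * alpha) * alpha).
set Q2 := eb * L * (4 * eps + 3) / (2 * alpha * (1 - 4 * alpha)).
have E2 : eb * L * (1 + eps) / (2 * (1 - 4 * alpha) * alpha * beta) * A0 * eps
   + eb * L * (4 * eps + 3) / (2 * alpha * (1 - 4 * alpha)) * K * eps = Q1 * Y + Q2 * Z.
  rewrite /Q1 /Q2 /Y /Z; field.
  by rewrite !gt_eqF //= ?mulr_gt0.
set P := eb * L / (2 * alpha).
have Pp : 0 < P by rewrite /P divr_gt0 ?mulr_gt0.
have q1 : Q1 - R1 = P * (((1 + eps) * b - (1 - 4 * alpha)) / ((1 - 4 * alpha) * b)).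
  rewrite /Q1 /R1 /P; field.
  by rewrite !gt_eqF //= ?mulr_gt0.
have q2 : Q2 - 3 * R1 = P * (((4 * eps + 3) * b - 3 * (1 - 4 * alpha)) / ((1 - 4 * alpha) * b)).
  rewrite /Q2 /R1 /P; field.
  by rewrite !gt_eqF //= ?mulr_gt0.
have q1' : 0 <= Q1 - R1.
  rewrite q1; apply: mulr_ge0; first exact: ltW.
  apply: divr_ge0; last by apply: mulr_ge0; apply: ltW.
  rewrite /b; nra.
have q2' : 0 <= Q2 - 3 * R1.
  rewrite q2; apply: mulr_ge0; first exact: ltW.
  apply: divr_ge0; last by apply: mulr_ge0; apply: ltW.
  rewrite /b; nra.
rewrite E2; rewrite E1 in h2.
have : R1 * Y <= Q1 * Y by rewrite ler_wpM2r // -subr_ge0.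
have : 3 * R1 * Z <= Q2 * Z by rewrite ler_wpM2r // -subr_ge0.
lra.
Qed.

Local Close Scope classical_set_scope.
Local Open Scope ring_scope.

Lemma PhiF_ge0 (R : realType) (n c d : nat) (h : 'I_n -> 'cV[R]_d -> 'cV[R]_c)
  (phi : 'I_n -> 'cV[R]_c -> R) eta al w u : 0 <= PhiF h phi eta al w u.
Proof.
rewrite /PhiF mulr_ge0 ?invr_ge0 ?mulr_ge0 //; last by apply: sumr_ge0 => i _; exact: sqnorm_ge0.
Qed.

Lemma pow_le_exp (R : realType) (eps beta : R) (t T : nat) :
  0 < eps -> T%:R = beta / eps -> (t <= T)%N -> (1 + eps) ^+ t <= expR beta.
Proof.
move=> e0 HT tT.
have : (1 + eps) ^+ t <= expR eps ^+ t.
  apply: lerXn2r; rewrite ?nnegrE ?expR_ge0 //; first by lra.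
  exact: expR_ge1Dx.
move/le_trans; apply.
rewrite -expRM_natl ler_expR.
have -> : beta = T%:R * eps by rewrite HT divfK // gt_eqF.
by rewrite ler_wpM2r ?ler_nat // ltW.
Qed.
Theorem mainTheorem17 (R : realType) (n c d : nat)
  (h : 'I_n -> 'cV[R]_d -> 'cV[R]_c) (phi : 'I_n -> 'cV[R]_c -> R)
  (hstar : 'I_n -> 'cV[R]_c)
  (Lphi G Hc V eps beta Dc alpha : R) (T : nat) (w v : nat -> 'cV[R]_d) :
  (0 < n)%N -> (0 < c)%N -> (0 < d)%N ->
  (* each phi_i attains its minimum at hstar i *)
  (forall i x, phi i (hstar i) <= phi i x) ->
  (* Assumption A *)
  0 < Lphi ->
  (forall i, convex_fn (phi i)) ->
  (forall i, bounded_below (phi i)) ->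
  (forall i, Lsmooth Lphi (phi i)) ->
  (* Assumption B *)
  0 < G ->
  (forall i j, C2 (hcomp (h i) j)) ->
  (forall i j x, op_norm_le (hess (hcomp (h i) j) x) G) ->
  (* parameters *)
  0 < eps -> 0 < beta -> T%:R = beta / eps ->
  0 < Dc -> 0 < alpha < 1 / 4 ->
  let eta : R := Dc * Num.sqrt eps in
  let al : nat -> 'I_n -> R :=
    fun t _ => (1 + eps) ^+ t * (alpha / (expR beta * Lphi)) in
  (* Algorithm 2 *)
  (forall t, (t < T)%N -> w t.+1 = w t - eta *: v t) ->
  (forall t, (t < T)%N -> exists vr : 'cV[R]_d,
      (forall u, PsiF h phi eta (al t) eps (w t) vr <= PsiF h phi eta (al t) eps (w t) u)
      /\ enorm (v t - vr) <= eps) ->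
  (* Assumption C *)
  0 < V ->
  (forall t, (t < T)%N -> exists vh : 'cV[R]_d,
      sqnorm vh <= V /\ PhiF h phi eta (al t) (w t) vh <= eps ^+ 2) ->
  (* Assumption D *)
  0 < Hc ->
  (forall i t, (t < T)%N -> op_norm_le (jac (h i) (w t)) (Hc / Num.sqrt eps)) ->
  (T%:R)^-1 * \sum_(t < T) ((n%:R)^-1 *
      \sum_(i < n) (phi i (h i (w t)) - phi i (hstar i)))
  <= expR beta * Lphi * (1 + eps) / (2 * (1 - 4 * alpha) * alpha * beta)
       * ((n%:R)^-1 * \sum_(i < n) sqnorm (h i (w 0%N) - hstar i)) * eps
     + expR beta * Lphi * (4 * eps + 3) / (2 * alpha * (1 - 4 * alpha))
       * (Dc ^+ 2 * Hc ^+ 2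
          + c%:R * (2 + (V + eps ^+ 2 + 2) * G * Dc ^+ 2) ^+ 2 + 2 + V) * eps.
Proof.
Proof.
move=> n0 c0 d0 hmin L0 cvx _ smooth G0 hC2 hH eps0 beta0 HT D0 /andP[a0 a4]
  eta al Hw Hv V0 HC H0 HD.
set X := 2 + (V + eps ^+ 2 + 2) * G * Dc ^+ 2.
set K := Dc ^+ 2 * Hc ^+ 2 + c%:R * X ^+ 2 + 2 + V.
pose A := fun t => n%:R^-1 * \sum_(i < n) sqnorm (h i (w t) - hstar i).
pose Dl := fun t => n%:R^-1 * \sum_(i < n) (phi i (h i (w t)) - phi i (hstar i)).
have eta2 : eta ^+ 2 = Dc ^+ 2 * eps by rewrite /eta exprMn sqr_sqrtr // ltW.
have se0 : 0 < Num.sqrt eps by rewrite sqrtr_gt0.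
have e20 : 0 <= eps ^+ 2 by exact: sqr_ge0.
have X0 : 0 <= X.
  rewrite /X; apply: addr_ge0 => //; apply: mulr_ge0; last exact: sqr_ge0.
  by apply: mulr_ge0; [lra|exact: ltW].
have K0 : 0 <= K.
  rewrite /K; have := sqr_ge0 (Dc * Hc); rewrite exprMn => ?.
  have : 0 <= c%:R * X ^+ 2 :> R by rewrite mulr_ge0 // sqr_ge0.
  lra.
have n0' : 0 < n%:R :> R by rewrite ltr0n.
have step : forall t, (t < T)%N -> A t.+1 <= (1 + eps) * (A t - 2 * ((1 + eps) ^+ t *
     (alpha / (expR beta * Lphi))) * (1 - 2 * alpha) * Dl t) + 3 * eps * K * (1 + eps).
  move=> t Ht.
  set at0 := (1 + eps) ^+ t * (alpha / (expR beta * Lphi)).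
  have eL : 0 < expR beta * Lphi by rewrite mulr_gt0 // expR_gt0.
  have pt := @pow_le_exp R eps beta t T eps0 HT (ltnW Ht).
  have pt0 : 0 <= (1 + eps) ^+ t by rewrite exprn_ge0 //; lra.
  have at00 : 0 <= at0 by rewrite /at0 mulr_ge0 // divr_ge0 ?ltW.
  have atL : at0 * Lphi <= alpha.
    have eb0 : 0 < expR beta :> R by exact: expR_gt0.
    have -> : at0 * Lphi = (1 + eps) ^+ t * alpha / expR beta.
      by rewrite /at0; field; rewrite !gt_eqF.
    by rewrite ler_pdivrMr // mulrC ler_wpM2l // ltW.
  have [r [rmin rv]] := Hv t Ht.
  have [vh [vhV vhP]] := HC t Ht.
  have Psi_le := rmin vh; rewrite /PsiF in Psi_le.
  have Pr0 := @PhiF_ge0 R n c d h phi eta (al t) (w t) r.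
  have sr0 := sqnorm_ge0 r.
  have svh0 := sqnorm_ge0 vh.
  have hv : eps ^+ 2 / 2 * sqnorm vh <= eps ^+ 2 / 2 * V by rewrite ler_wpM2l // divr_ge0.
  have Phir : PhiF h phi eta (al t) (w t) r <= eps ^+ 2 * (1 + V / 2).
    have : 0 <= eps ^+ 2 / 2 * sqnorm r by rewrite mulr_ge0 // divr_ge0.
    lra.
  have sr : sqnorm r <= 2 + V.
    have h1 : eps ^+ 2 / 2 * sqnorm r <= eps ^+ 2 / 2 * (2 + V) by lra.
    by move: h1; rewrite ler_pM2l // divr_gt0 // exprn_gt0.
  have svr : sqnorm (v t - r) <= eps ^+ 2 by exact: enorm_le_sq.
  have sv : sqnorm (v t) <= 2 * (2 + V) + 2 * eps ^+ 2.
    have := sqnormD_le r (v t - r) (ltr01 : 0 < 1 :> R).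
    rewrite addrC subrK invr1; lra.
  set C0 := c%:R * (eps * X) ^+ 2 + Dc ^+ 2 * Hc ^+ 2 * eps ^+ 2.
  have per_i : forall i, sqnorm (h i (w t.+1) - hstar i) <=
     (1 + eps) * (sqnorm (h i (w t) - hstar i) - 2 * at0 * (1 - 2 * alpha) *
        (phi i (h i (w t)) - phi i (hstar i)))
     + 3 * (1 + eps^-1) * (C0 + sqnorm (eta *: (jac (h i) (w t) *m r)
                                      - al t i *: grad (phi i) (h i (w t)))).
    move=> i.
    set hi := h i (w t); set g := grad (phi i) hi; set J := jac (h i) (w t).
    set rho := h i (w t - eta *: v t) - hi + eta *: (J *m v t).
    set e1 := eta *: (J *m r) - al t i *: g.
    set e2 := eta *: (J *m (v t - r)).
    set u := h i (w t.+1) - hi + at0 *: g.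
    have Eu : u = rho - e1 - e2.
      rewrite /u /rho /e1 /e2 (Hw t Ht) mulmxBr.
      have alE : al t i = at0 by [].
      by apply/matrixP => a b; rewrite !mxE alE; ring.
    have Eh : h i (w t.+1) - hstar i = (hi - hstar i) - at0 *: g + u.
      by rewrite /u; apply/matrixP => a b; rewrite !mxE; lra.
    have [dphi lphi] := smooth i.
    have gi := @grad_ineq R c (phi i) hi (hstar i) (cvx i) (dphi hi).
    have gi' : - dot g (hi - hstar i) <= - (phi i hi - phi i (hstar i)).
      by rewrite -dotNr opprB; lra.
    have sb := @smooth_bound R c (phi i) Lphi (hstar i) hi L0 (cvx i) (smooth i) (hmin i).
    have D0i : 0 <= phi i hi - phi i (hstar i) by rewrite subr_ge0.
    rewrite Eh.
    apply: le_trans (@step_i R c _ _ _ _ _ _ _ _ gi' sb D0i at00 atL eps0) _.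
    rewrite lerD2l.
    have ei : 0 < eps^-1 by rewrite invr_gt0.
    have pe : 0 <= 1 + eps^-1 by lra.
    rewrite [3 * _]mulrC -mulrA ler_wpM2l //.
    rewrite Eu.
    have S3 := sqnorm3 rho (- e1) (- e2); rewrite !sqnormN in S3.
    apply: le_trans S3 _.
    rewrite ler_wpM2l //.
    have Hrho : sqnorm rho <= c%:R * (eps * X) ^+ 2.
      apply: (@rho_bound R c d (h i) (w t) (v t) eta G (eps * X) G0 (hC2 i) (hH i)).
      rewrite eta2.
      have : G * (Dc ^+ 2 * eps * sqnorm (v t)) / 2 =
             eps * (G * Dc ^+ 2 * (sqnorm (v t) / 2)) by field.
      move=> ->; rewrite ler_wpM2l ?ltW // /X.
      have GD : 0 <= G * Dc ^+ 2 by rewrite mulr_ge0 ?sqr_ge0 // ltW.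
      have : G * Dc ^+ 2 * (sqnorm (v t) / 2) <= G * Dc ^+ 2 * (V + eps ^+ 2 + 2).
        by rewrite ler_wpM2l //; lra.
      rewrite mulrAC; lra.
    have He2 : sqnorm e2 <= Dc ^+ 2 * Hc ^+ 2 * eps ^+ 2.
      rewrite /e2 sqnormZ eta2.
      have HJ := op_norm_sq (v t - r) (divr_ge0 (ltW H0) (ltW se0)) (HD i t Ht).
      rewrite expr_div_n sqr_sqrtr in HJ; last exact: ltW eps0.
      have : sqnorm (J *m (v t - r)) <= Hc ^+ 2 / eps * eps ^+ 2.
        apply: le_trans HJ _; apply: ler_wpM2l => //; apply: divr_ge0; [exact: sqr_ge0|exact: ltW].
      move=> HJ2; have E5 : Hc ^+ 2 / eps * eps ^+ 2 = Hc ^+ 2 * eps by field; rewrite gt_eqF.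
      rewrite E5 in HJ2.
      have : Dc ^+ 2 * eps * sqnorm (J *m (v t - r)) <= Dc ^+ 2 * eps * (Hc ^+ 2 * eps).
        by rewrite ler_wpM2l // mulr_ge0 ?sqr_ge0 // ltW.
      have -> : Dc ^+ 2 * eps * (Hc ^+ 2 * eps) = Dc ^+ 2 * Hc ^+ 2 * eps ^+ 2 by ring.
      by [].
    rewrite /C0; lra.
  have Av := @avg_lin R n (fun i => sqnorm (h i (w t) - hstar i))
    (fun i => phi i (h i (w t)) - phi i (hstar i))
    (fun i => sqnorm (eta *: (jac (h i) (w t) *m r) - al t i *: grad (phi i) (h i (w t))))
    (fun i => sqnorm (h i (w t.+1) - hstar i)) (1 + eps) (2 * at0 * (1 - 2 * alpha))
    (3 * (1 + eps^-1)) C0 n0 per_i.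
  have Ez : n%:R^-1 * \sum_(i < n) sqnorm (eta *: (jac (h i) (w t) *m r)
              - al t i *: grad (phi i) (h i (w t))) = 2 * PhiF h phi eta (al t) (w t) r.
    by rewrite /PhiF; field; rewrite gt_eqF.
  rewrite Ez in Av.
  rewrite /A /Dl; apply: le_trans Av _.
  rewrite -mulrA lerD2l.
  have ei : 0 < eps^-1 by rewrite invr_gt0.
  have : 3 * (1 + eps^-1) * (C0 + 2 * PhiF h phi eta (al t) (w t) r) <=
         3 * (1 + eps^-1) * (C0 + eps ^+ 2 * (2 + V)).
    have pe : 0 <= 3 * (1 + eps^-1) by lra.
    rewrite ler_wpM2l //; lra.
  have -> : 3 * (1 + eps^-1) * (C0 + eps ^+ 2 * (2 + V)) = 3 * (eps * (K * (1 + eps))).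
    by rewrite /C0 /K; field; rewrite gt_eqF.
  by rewrite !mulrA.
have q1 : 1 <= 1 + eps by lra.
have C0' : 0 <= 3 * eps * K by rewrite mulr_ge0 // mulr_ge0 // ltW.
have AT0 : 0 <= A T.
  rewrite /A; apply: mulr_ge0; first by rewrite invr_ge0 ltW.
  by apply: sumr_ge0 => i _; exact: sqnorm_ge0.
have tel := @telescope_le R T A Dl (1 + eps) (alpha / (expR beta * Lphi)) (1 - 2 * alpha) (3 * eps * K) q1 C0' step AT0.
have A00 : 0 <= A 0%N.
  rewrite /A; apply: mulr_ge0; first by rewrite invr_ge0 ltW.
  by apply: sumr_ge0 => i _; exact: sqnorm_ge0.
exact: (@final_arith R _ _ _ _ _ _ _ _ _ A00 K0 L0 (expR_gt0 beta) eps0 beta0 a0 a4 HT tel).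
Qed.
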